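(* Let $s,s'\in H_A$ and $k>0$. Let $\bar s,\bar{s'}$ denote the forests obtained from $s$ and $s'$ by removing all nodes at depth $k$ or more. Then $s\sim_k s'$ if and only if $\bar s$ and $\bar{s'}$ are idempotent-and-commutative equivalent.
   Context: $H_A$ is the set of forests over the finite alphabet $A$ (finite ordered sequences of finite ordered $A$-labelled trees), with concatenation $+$; root nodes have depth $0$; $as$ is the tree with root $a$ and child forest $s$. Equivalences $\sim_k$: $\sim_0$ identifies all forests; for $s=a_1s_1+\cdots+a_rs_r$, $s\sim_{k+1}s'$ iff $\{(a_i,[s_i]_{\sim_k}):1\le i\le r\}$ equals the corresponding set for $s'$. Two forests are idempotent-and-commutative equivalent if one can be transformed into the other by finitely many operations: (i) $p(t_1+t_2)\to p(t_2+t_1)$ for a context $p$ and trees $t_1,t_2$; (ii) $pt\to p(t+t)$ for a tree $t$; (iii) $p(t+t)\to pt$ (a context is a forest with one leaf replaced by a hole, $pt$ the result of substituting $t$ into the hole). *)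

(* Defs.v *)
From mathcomp Require Import all_boot.
From Stdlib Require List.
Set Implicit Arguments. Unset Strict Implicit. Unset Printing Implicit Defensive.

(* Finite ordered A-labelled trees and forests.  [Node a s] is the tree "a s"
   with root label a and child forest s. *)
Inductive tree (A : Type) : Type := Node : A -> seq (tree A) -> tree A.
Arguments Node {A} _ _.
Definition forest (A : Type) := seq (tree A).

(* The equivalences ~_k : ~_0 is total; s ~_{k+1} s' iff the sets
   {(a_i, [s_i]_{~_k})} coincide, i.e. each pair of one set is a pair of the
   other (a pair (a,[c]) equals (a',[c']) iff a = a' and c ~_k c'). *)
Fixpoint simk (A : Type) (k : nat) (s s' : forest A) : Prop :=
  match k with
  | 0 => True
  | k'.+1 =>
      (forall a c, List.In (Node a c) s ->
         exists c', List.In (Node a c') s' /\ simk k' c c') /\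
      (forall a c', List.In (Node a c') s' ->
         exists c, List.In (Node a c) s /\ simk k' c c')
  end.

(* Remove all nodes at depth >= k (roots have depth 0). *)
Fixpoint trunc (A : Type) (k : nat) (s : forest A) : forest A :=
  match k with
  | 0 => [::]
  | k'.+1 => map (fun t => match t with Node a c => Node a (trunc k' c) end) s
  end.

(* Contexts: forests with one hole in place of a leaf.  The hole sits inside a
   sibling list: [Hole l r] is the forest l ++ [hole] ++ r, and [In l a p r]
   is l ++ [a (p)] ++ r. *)
Inductive context (A : Type) : Type :=
  | Hole : forest A -> forest A -> context A
  | InNode : forest A -> A -> context A -> forest A -> context A.

Fixpoint fill (A : Type) (p : context A) (t : forest A) : forest A :=
  match p with
  | Hole l r => l ++ t ++ r
  | InNode l a p' r => l ++ Node a (fill p' t) :: r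
  end.

Inductive ic_step (A : Type) : forest A -> forest A -> Prop :=
  | ic_swap p t1 t2 : ic_step (fill p [:: t1; t2]) (fill p [:: t2; t1])
  | ic_dup p t : ic_step (fill p [:: t]) (fill p [:: t; t])
  | ic_merge p t : ic_step (fill p [:: t; t]) (fill p [:: t]).

Inductive ic_equiv (A : Type) : forest A -> forest A -> Prop :=
  | ic_refl s : ic_equiv s s
  | ic_trans s s' s'' : ic_step s s' -> ic_equiv s' s'' -> ic_equiv s s''.

(* Main.v *)
Require Import Defs.
From mathcomp Require Import all_boot.
From Stdlib Require List.
Set Implicit Arguments. Unset Strict Implicit. Unset Printing Implicit Defensive.

Section Aux.
Variable A : Type.

Lemma In_cat (x : tree A) (a b : forest A) :
  List.In x (a ++ b) <-> List.In x a \/ List.In x b.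
Proof.
elim: a => [|y a IH] /=; first by tauto.
rewrite IH; tauto.
Qed.

Lemma In_split' (x : tree A) (u : forest A) :
  List.In x u -> exists l r, u = l ++ x :: r.
Proof.
elim: u => [|y u IH] //= [->|/IH [l [r ->]]].
- by exists [::], u.
- by exists (y :: l), r.
Qed.

Lemma simk_refl k (s : forest A) : simk k s s.
Proof.
elim: k s => [|k IH] s //=; split=> a c H; exists c; split; auto.
Qed.

Lemma simk_sym k (s s' : forest A) : simk k s s' -> simk k s' s.
Proof.
elim: k s s' => [|k IH] s s' //= [H1 H2]; split.
- move=> a c /H2 [c' [? ?]]; exists c'; split; auto.
- move=> a c /H1 [c' [? ?]]; exists c'; split; auto.
Qed.

Lemma simk_trans k (s1 s2 s3 : forest A) :
  simk k s1 s2 -> simk k s2 s3 -> simk k s1 s3.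
Proof.
elim: k s1 s2 s3 => [|k IH] s1 s2 s3 //= [H1 H2] [H3 H4]; split.
- move=> a c /H1 [c' [/H3 [c'' [? ?]] ?]]; exists c''; split; eauto.
- move=> a c /H4 [c' [/H2 [c'' [? ?]] ?]]; exists c''; split; eauto.
Qed.

Lemma simk_sameset k (u v : forest A) :
  (forall t, List.In t u <-> List.In t v) -> simk k u v.
Proof.
case: k => [|k] //= H; split=> a c /H Hc; exists c; split; auto;
  exact: simk_refl.
Qed.

Lemma simk_app k (a b c d : forest A) :
  simk k a b -> simk k c d -> simk k (a ++ c) (b ++ d).
Proof.
case: k => [|k] //= [H1 H2] [H3 H4]; split.
- move=> x y /In_cat [/H1|/H3] [y' [Hy ?]]; exists y'; split=> //;
  apply/In_cat; tauto.
- move=> x y /In_cat [/H2|/H4] [y' [Hy ?]]; exists y'; split=> //;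
  apply/In_cat; tauto.
Qed.

Lemma simk_node k a (c c' : forest A) :
  simk k c c' -> simk k.+1 [:: Node a c] [:: Node a c'].
Proof.
move=> H /=; split=> x y [] // [<- <-]; [exists c'|exists c]; split; auto.
Qed.

Lemma simk_fill (X Y : forest A) p :
  (forall k, simk k X Y) -> forall k, simk k (fill p X) (fill p Y).
Proof.
move=> H; elim: p => [l r|l a p IH r] k /=.
- apply: simk_app; first exact: simk_refl.
  apply: simk_app => //; exact: simk_refl.
- case: k => [|k] //.
  apply: simk_app; first exact: simk_refl.
  apply: (@simk_app _ [:: _] [:: _]); last exact: simk_refl.
  exact: simk_node.
Qed.

Lemma simk_step (X Y : forest A) : ic_step X Y -> forall k, simk k X Y.
Proof.
case=> [p t1 t2|p t|p t]; apply: simk_fill => k; apply: simk_sameset => x /=;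
  tauto.
Qed.

Lemma simk_equiv (X Y : forest A) : ic_equiv X Y -> forall k, simk k X Y.
Proof.
elim=> [s|s s' s'' H _ IH] k; first exact: simk_refl.
exact: simk_trans (simk_step H k) (IH k).
Qed.

Lemma simk_trunc k (s : forest A) : simk k s (trunc k s).
Proof.
elim: k s => [|k IH] s //=; split.
- move=> a c H; exists (trunc k c); split; last exact: IH.
  exact: (List.in_map (fun t => match t with Node a c => Node a (trunc k c) end) _ _ H).
- move=> a c' /List.in_map_iff [[b c] [[<- <-] H]]; exists c; split; auto.
Qed.

Definition wrap (l r : forest A) (p : context A) : context A :=
  match p with
  | Hole l' r' => Hole (l ++ l') (r' ++ r)
  | InNode l' a q r' => InNode (l ++ l') a q (r' ++ r)
  end.

Lemma fill_wrap l r p t : fill (wrap l r p) t = l ++ fill p t ++ r.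
Proof. by case: p => [l' r'|l' a q r'] /=; rewrite -!catA. Qed.

Lemma step_app (X Y l r : forest A) :
  ic_step X Y -> ic_step (l ++ X ++ r) (l ++ Y ++ r).
Proof.
case=> [p t1 t2|p t|p t].
- by have := ic_swap (wrap l r p) t1 t2; rewrite !fill_wrap.
- by have := ic_dup (wrap l r p) t; rewrite !fill_wrap.
- by have := ic_merge (wrap l r p) t; rewrite !fill_wrap.
Qed.

Lemma step_node a (X Y : forest A) :
  ic_step X Y -> ic_step [:: Node a X] [:: Node a Y].
Proof.
case=> [p t1 t2|p t|p t].
- exact: (ic_swap (InNode [::] a p [::]) t1 t2).
- exact: (ic_dup (InNode [::] a p [::]) t).
- exact: (ic_merge (InNode [::] a p [::]) t).
Qed.

Lemma step_sym (X Y : forest A) : ic_step X Y -> ic_step Y X.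
Proof. case=> *; constructor. Qed.

Lemma eq_trans (X Y Z : forest A) : ic_equiv X Y -> ic_equiv Y Z -> ic_equiv X Z.
Proof. elim=> // s s' s'' H _ IH /IH; exact: ic_trans. Qed.

Lemma eq_step (X Y : forest A) : ic_step X Y -> ic_equiv X Y.
Proof. move=> H; apply: ic_trans H (ic_refl _). Qed.

Lemma eq_sym (X Y : forest A) : ic_equiv X Y -> ic_equiv Y X.
Proof.
elim=> [s|s s' s'' H _ IH]; first exact: ic_refl.
apply: eq_trans IH (eq_step (step_sym H)).
Qed.

Lemma eq_app (X Y l r : forest A) :
  ic_equiv X Y -> ic_equiv (l ++ X ++ r) (l ++ Y ++ r).
Proof.
elim=> [s|s s' s'' H _ IH]; first exact: ic_refl.
exact: ic_trans (step_app l r H) IH.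
Qed.

Lemma eq_node a (X Y : forest A) :
  ic_equiv X Y -> ic_equiv [:: Node a X] [:: Node a Y].
Proof.
elim=> [s|s s' s'' H _ IH]; first exact: ic_refl.
exact: ic_trans (step_node a H) IH.
Qed.

Lemma eq_move (x : tree A) r : ic_equiv (x :: r) (r ++ [:: x]).
Proof.
elim: r => [|y r IH] /=; first exact: ic_refl.
apply: ic_trans (ic_swap (Hole [::] r) x y) _ => /=.
by have := eq_app [:: y] [::] IH; rewrite !cats0.
Qed.

Lemma eq_comm (x y : forest A) : ic_equiv (x ++ y) (y ++ x).
Proof.
elim: x => [|z x IH] /=; first by rewrite cats0; exact: ic_refl.
apply: eq_trans (eq_move _ _) _.
have := eq_app [::] [:: z] IH; rewrite /= => H.
apply: eq_trans H _.
have := eq_app y [::] (eq_sym (eq_move z x)); rewrite !cats0 catA; exact.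
Qed.

Lemma eq_absorb (u : forest A) t : List.In t u -> ic_equiv u (u ++ [:: t]).
Proof.
move=> /In_split' [l [r ->]].
apply: ic_trans (ic_dup (Hole l r) t) _ => /=.
have := eq_app l [::] (eq_move t (t :: r)); rewrite !cats0 /= -catA /=; exact.
Qed.

Lemma eq_key (u v : forest A) :
  (forall t', List.In t' v -> exists t, List.In t u /\ ic_equiv [:: t] [:: t']) ->
  forall w, ic_equiv (u ++ w) (u ++ w ++ v).
Proof.
elim: v => [|t' v IH] H w; first by rewrite cats0; exact: ic_refl.
have [t [Ht Htt]] := H t' (or_introl erefl).
apply: eq_trans (eq_absorb (t := t) _) _.
  by apply/In_cat; left.
have := eq_app (u ++ w) [::] Htt; rewrite !cats0 => H1.
apply: eq_trans H1 _.
have := IH (fun x Hx => H x (or_intror Hx)) (w ++ [:: t']).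
by rewrite -!catA cat1s.
Qed.

Lemma simk_eq k (s s' : forest A) :
  simk k s s' -> ic_equiv (trunc k s) (trunc k s').
Proof.
elim: k s s' => [|k IH] s s' /=; first by move=> _; exact: ic_refl.
move=> [H1 H2].
set f := (fun t : tree A => match t with Node a c => Node a (trunc k c) end).
have K : forall s s' : forest A,
  (forall a c', List.In (Node a c') s' -> exists c, List.In (Node a c) s /\ simk k c c') ->
  ic_equiv (map f s) (map f s ++ map f s').
  move=> u u' Hu; have := eq_key (u := map f u) (v := map f u') _ [::].
  rewrite cats0; apply=> t' /List.in_map_iff [[a c'] [<- Hin]].
  have [c [Hc Hcc]] := Hu _ _ Hin.
  exists (f (Node a c)); split; first exact: List.in_map.
  exact: eq_node (IH _ _ Hcc).
apply: eq_trans (K s s' H2) _.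
apply: eq_trans (eq_comm _ _) _.
apply: eq_sym; apply: K => a c' /H1 [c [? ?]]; exists c; split=> //.
exact: simk_sym.
Qed.

End Aux.

Theorem lemma5 (A : finType) (s s' : forest A) (k : nat) :
  0 < k -> (simk k s s' <-> ic_equiv (trunc k s) (trunc k s')).
Proof.
move=> _; split; first exact: simk_eq.
move=> /simk_equiv H.
apply: simk_trans (simk_trunc k s) _.
apply: simk_trans (H k) _.
exact: simk_sym (simk_trunc k s').
Qed.
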